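(* Let $x$ be a real number with $x>(1+\sqrt2)/2$ or $x<(1-\sqrt2)/2$. Then $$\sum_{k=0}^\infty\frac{(2(2x-1)^2(2x-3)k-(4x^3-16x^2+7x+6))4^k}{(x(1-x))^k\binom{4k}{2k}}=(1-x)\left(3R(x)+4x(x-3)\right)$$ and $$\sum_{k=0}^\infty\frac{(2(2x-1)^2(2x+1)k-(4x^3+4x^2-13x-1))4^k}{(x(1-x))^k\binom{4k}{2k}}=-x\left(3R(1-x)+4(x-1)(x+2)\right).$$
   Context: For real $y$ with $y>1$ or $y<0$, define $R(y)=\sqrt y\,\operatorname{arctanh}\frac1{\sqrt y}$, i.e. $R(y)=\frac{\sqrt y}2\log\frac{\sqrt y+1}{\sqrt y-1}$ if $y>1$ and $R(y)=\sqrt{|y|}\arctan\frac1{\sqrt{|y|}}$ if $y<0$. *)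

(* Defs.v *)
From Stdlib Require Import Reals.
From Coquelicot Require Import Coquelicot.
Open Scope R_scope.

(* R(y) = sqrt y * arctanh(1/sqrt y), for y > 1 or y < 0:
   = (sqrt y / 2) * ln((sqrt y + 1)/(sqrt y - 1))  if y > 1,
   = sqrt|y| * atan(1/sqrt|y|)                      if y < 0.
   (Values for 0 <= y <= 1 are irrelevant junk.) *)
Definition Rfun (y : R) : R :=
  if Rlt_dec 1 y then sqrt y / 2 * ln ((sqrt y + 1) / (sqrt y - 1))
  else sqrt (- y) * atan (1 / sqrt (- y)).

Definition binomR (n k : nat) : R := Binomial.C n k.

(* Main.v *)
Require Import Defs.
From Stdlib Require Import Reals Lra Lia Psatz.
From Coquelicot Require Import Coquelicot.
Open Scope R_scope.

Lemma is_RInt_eqv (f : R -> R) a b l l' : is_RInt f a b l -> l = l' -> is_RInt f a b l'.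
Proof. intros H ->; exact H. Qed.

Lemma cont_of_der (f : R -> R) x : ex_derive f x -> continuous f x.
Proof. intro H. exact (@ex_derive_continuous R_AbsRing R_NormedModule f x H). Qed.

Fixpoint Wv (n : nat) : R :=
  match n with O => 1 | S m => (2 * INR m + 2) / (2 * INR m + 3) * Wv m end.

Lemma Wv_int n : is_RInt (fun v => (1 - v^2)^n) 0 1 (Wv n).
Proof.
  induction n as [|n IH].
  - eapply is_RInt_eqv.
    + apply (is_RInt_ext (fun _ => 1)). { intros; simpl; ring. } apply is_RInt_const.
    + simpl. unfold scal; simpl; unfold mult; simpl. ring.
  - assert (Hd : is_RInt (fun v => (2 * INR n + 3) * (1 - v^2)^(S n) - (2 * INR n + 2) * (1 - v^2)^n) 0 1 0).
    { eapply is_RInt_eqv.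
      apply (is_RInt_derive (fun v => v * (1 - v^2)^(S n))).
      + intros v _. auto_derive. auto. simpl. match goal with |- ?a = ?b => change (@eq R a b) end. change (match n with 0%nat => 1 | S _ => INR n + 1 end) with (INR (S n)). rewrite S_INR. unfold Rminus. ring.
      + intros v _. apply cont_of_der. auto_derive. auto.
      + unfold minus, plus, opp; simpl. ring. }
    pose proof (is_RInt_plus _ _ _ _ _ _ Hd (is_RInt_scal _ _ _ (2 * INR n + 2) _ IH)) as H2.
    pose proof (is_RInt_scal _ _ _ (/ (2 * INR n + 3)) _ H2) as H3.
    assert (Hp : 0 < 2 * INR n + 3) by (pose proof (pos_INR n); lra).
    eapply is_RInt_eqv.
    + eapply is_RInt_ext; [|exact H3]. intros v _. unfold scal, plus; simpl; unfold mult; simpl.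
      field. lra.
    + unfold scal, plus; simpl; unfold mult, plus; simpl. field. lra.
Qed.

Lemma binomR_eq k : binomR (4*k) (2*k) = INR (Factorial.fact (4*k)) / (INR (Factorial.fact (2*k)))^2.
Proof.
  unfold binomR, Binomial.C. replace (4*k - 2*k)%nat with (2*k)%nat by lia. simpl. field.
  apply INR_fact_neq_0.
Qed.

Lemma Wv_even k : Wv (2*k) * (4 * INR k + 1) * binomR (4*k) (2*k) = 16^k.
Proof.
  rewrite binomR_eq.
  induction k as [|k IH].
  - simpl. field.
  - replace (2 * S k)%nat with (S (S (2*k))) by lia.
    replace (4 * S k)%nat with (S (S (S (S (4*k))))) by lia.
    cbn [Wv].
    rewrite !fact_simpl, !mult_INR, !S_INR.
    set (F4 := INR (Factorial.fact (4*k))) in *.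
    set (F2 := INR (Factorial.fact (2*k))) in *.
    assert (HF4 : F4 <> 0) by apply INR_fact_neq_0.
    assert (HF2 : F2 <> 0) by apply INR_fact_neq_0.
    pose proof (pos_INR k).
    assert (HW : Wv (2*k) = 16^k * F2^2 / ((4 * INR k + 1) * F4)).
    { rewrite <- IH. field. repeat split; auto; lra. }
    rewrite HW. rewrite !mult_INR. simpl INR. simpl pow. field. repeat split; auto; lra.
Qed.
Definition hf (x v : R) := 2 * x * (2 * x - 1 - v^2) / ((1 - v^2)^2 - 4 * (x * (1 - x))).

Lemma hf_int x : 1 < x -> is_RInt (hf x) 0 1 (Rfun x).
Proof.
  intros Hx.
  set (r := sqrt x).
  assert (Hr1 : 1 < r). { unfold r. rewrite <- sqrt_1. apply sqrt_lt_1; lra. }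
  assert (Hxr : x = r * r). { unfold r. rewrite sqrt_sqrt; lra. }
  unfold Rfun. destruct (Rlt_dec 1 x) as [_|]; [|lra]. fold r.
  assert (Hp : forall v, 0 < v^2 + 2*r*v + 2*r*r - 1) by (intros v; pose proof (pow2_ge_0 (v + r)); nra).
  assert (Hm : forall v, 0 < v^2 - 2*r*v + 2*r*r - 1) by (intros v; pose proof (pow2_ge_0 (v - r)); nra).
  eapply is_RInt_eqv.
  - apply (is_RInt_derive (fun v => r / 2 * (ln (v^2 + 2*r*v + 2*r*r - 1) - ln (v^2 - 2*r*v + 2*r*r - 1)))).
    + intros v _. auto_derive.
      * split; [apply Hp|split; [apply Hm|auto]].
      * unfold hf. rewrite Hxr. specialize (Hp v). specialize (Hm v). field.
        split; try lra. nra.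
    + intros v _. apply cont_of_der. unfold hf. auto_derive. apply Rgt_not_eq. rewrite Hxr. pose proof (pow2_ge_0 (1 + - (v * (v * 1)))). nra.
  - unfold minus, plus, opp; simpl.
    replace (0 * (0 * 1) + 2 * r * 0 + 2 * r * r - 1) with (0 * (0 * 1) - 2 * r * 0 + 2 * r * r - 1) by ring.
    rewrite <- ln_div by (specialize (Hp 1); specialize (Hm 1); simpl in *; lra).
    replace ((1 * (1 * 1) + 2 * r * 1 + 2 * r * r - 1) / (1 * (1 * 1) - 2 * r * 1 + 2 * r * r - 1)) with ((r + 1) / (r - 1)) by (field; repeat split; apply Rgt_not_eq; nra).
    ring.
Qed.

Lemma hf_int_neg x : x < 0 -> is_RInt (hf x) 0 1 (Rfun x).
Proof.
  intros Hx.
  set (r := sqrt (-x)).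
  assert (Hr1 : 0 < r). { unfold r. apply sqrt_lt_R0; lra. }
  assert (Hxr : x = - (r * r)). { unfold r. rewrite sqrt_sqrt; lra. }
  unfold Rfun. destruct (Rlt_dec 1 x) as [|_]; [lra|]. fold r.
  eapply is_RInt_eqv.
  - apply (is_RInt_derive (fun v => r * atan (2 * r * v / (1 + 2*r*r - v^2)))).
    + intros v Hv. rewrite Rmin_left in Hv by lra. rewrite Rmax_right in Hv by lra.
      auto_derive.
      * apply Rgt_not_eq; nra.
      * unfold hf. rewrite Hxr. field. split; apply Rgt_not_eq; [pose proof (pow2_ge_0 (1 - v^2)); nra | nra].
    + intros v _. apply cont_of_der. unfold hf. auto_derive. apply Rgt_not_eq. rewrite Hxr. pose proof (pow2_ge_0 (1 + - (v * (v * 1)))). nra.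
  - unfold minus, plus, opp; simpl.
    replace (2 * r * 0 / (1 + 2 * r * r - 0 * (0 * 1))) with 0 by (field; nra).
    rewrite atan_0.
    replace (2 * r * 1 / (1 + 2 * r * r - 1 * (1 * 1))) with (1 / r) by (field; lra).
    ring.
Qed.
Definition Ac x := 2*(2*x-1)^2*(2*x-3).
Definition Bc x := 4*x^3-16*x^2+7*x+6.
Definition pp x m := (Ac x * m - Bc x) * (4*m+1).
Definition MM x m z := pp x m + (pp x (m+1) - 3*pp x m)*z + (pp x (m+2) - 3*pp x (m+1) + 3*pp x m)*z^2.
Definition zz x v := (1-v^2)^2/(4*(x*(1-x))).
Definition Phi x v := MM x 0 (zz x v) / (1 - zz x v)^3.
Definition Pp x v :=
  (18*x + 98*x^2 - 348*x^3 + 344*x^4 - 112*x^5)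
  + (-66*x - 86*x^2 + 480*x^3 - 488*x^4 + 160*x^5) * v^2
  + (90*x - 66*x^2 - 120*x^3 + 144*x^4 - 48*x^5) * v^4
  + (-54*x + 70*x^2 - 16*x^3) * v^6
  + (12*x - 16*x^2 + 4*x^3) * v^8.
Definition Gf x v := v * Pp x v / (4*(x*(1-x)) - (1-v^2)^2)^2.

Lemma Gf_der x v : 4*(x*(1-x)) < -1 ->
  is_derive (Gf x) v (Phi x v - 3*(1-x)*hf x v - 4*x*(x-3)*(1-x)).
Proof.
  intros Ht. unfold Gf, Phi, MM, zz, hf, pp, Pp, Ac, Bc.
  assert (Hw : 0 <= (1 - v^2)^2) by apply pow2_ge_0.
  auto_derive.
  - pose proof (pow2_ge_0 (1 + - (v * (v * 1)))).
    apply Rmult_integral_contrapositive_currified; [apply Rlt_not_eq; nra|].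
    apply Rmult_integral_contrapositive_currified; [apply Rlt_not_eq; nra|lra].
  - field. repeat split; intro; nra.
Qed.

Lemma Phi_int x : (1 < x \/ x < 0) -> 4*(x*(1-x)) < -1 ->
  is_RInt (Phi x) 0 1 ((1-x)*(3*Rfun x + 4*x*(x-3))).
Proof.
  intros Hx Ht.
  assert (HG : is_RInt (fun v => Phi x v - 3*(1-x)*hf x v - 4*x*(x-3)*(1-x)) 0 1 0).
  { eapply is_RInt_eqv.
    - apply (is_RInt_derive (Gf x)).
      + intros v _. apply Gf_der; auto.
      + intros v _. apply cont_of_der. unfold Phi, MM, zz, hf, pp, Ac, Bc.
        pose proof (pow2_ge_0 (1 + - (v * (v * 1)))).
        assert (Hi : / (4*(x*(1-x))) < 0) by (apply Rinv_lt_0_compat; lra).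
        assert (Hz : 0 < 1 + - ((1 + - (v*(v*1))) * ((1 + - (v*(v*1)))*1) * / (4*(x*(1-x))))) by nra.
        auto_derive. split; [|split; [|auto]]; apply Rgt_not_eq.
        * repeat apply Rmult_lt_0_compat; lra.
        * nra.
    - unfold minus, plus, opp; simpl. unfold Gf, Pp. field. repeat split; intro; nra. }
  assert (Hh : is_RInt (hf x) 0 1 (Rfun x)).
  { destruct Hx; [apply hf_int | apply hf_int_neg]; auto. }
  pose proof (is_RInt_plus _ _ _ _ _ _ (is_RInt_plus _ _ _ _ _ _ HG (is_RInt_scal _ _ _ (3*(1-x)) _ Hh))
      (is_RInt_const 0 1 (4*x*(x-3)*(1-x)))) as H.
  eapply is_RInt_eqv.
  - eapply is_RInt_ext; [|exact H]. intros v _. unfold plus, scal; simpl; unfold mult; simpl. ring.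
  - unfold plus, scal; simpl; unfold mult, plus; simpl. ring.
Qed.

Definition term1 x k := (2 * (2 * x - 1) ^ 2 * (2 * x - 3) * INR k
         - (4 * x ^ 3 - 16 * x ^ 2 + 7 * x + 6)) * 4 ^ k
      / ((x * (1 - x)) ^ k * binomR (4 * k) (2 * k)).

Lemma binom_nz k : binomR (4*k) (2*k) <> 0.
Proof.
  intro H. pose proof (Wv_even k) as E. rewrite H, Rmult_0_r in E.
  symmetry in E. revert E. apply pow_nonzero. lra.
Qed.

Lemma term_int x k : x * (1 - x) <> 0 ->
  is_RInt (fun v => pp x (INR k) * zz x v ^ k) 0 1 (term1 x k).
Proof.
  intros Ht.
  pose proof (is_RInt_scal _ _ _ (pp x (INR k) / (4 * (x*(1-x)))^k) _ (Wv_int (2*k))) as H.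
  pose proof (Wv_even k) as E. pose proof (binom_nz k) as Hb. pose proof (pos_INR k).
  assert (HW : Wv (2*k) = 16^k / ((4 * INR k + 1) * binomR (4*k) (2*k))).
  { rewrite <- E. field. split; auto; lra. }
  eapply is_RInt_eqv.
  - eapply is_RInt_ext; [|exact H]. intros v _. cbv beta. rewrite pow_mult. change (scal ?a ?b) with (a*b).
    unfold zz. unfold Rdiv. rewrite (Rpow_mult_distr ((1-v^2)^2)), pow_inv. match goal with |- ?a = ?b => change (@eq R a b) end. ring.
  - change (scal ?a ?b) with (a*b). rewrite HW. unfold term1, pp, Ac, Bc.
    replace 16 with (4*4) by ring. rewrite !Rpow_mult_distr.
    assert (4^k <> 0) by (apply pow_nonzero; lra).
    assert ((x*(1-x))^k <> 0) by (apply pow_nonzero; auto).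
    match goal with |- ?a = ?b => change (@eq R a b) end. assert (x <> 0) by (intro Hx0; apply Ht; rewrite Hx0; ring). assert (1 - x <> 0) by (intro Hx0; apply Ht; rewrite Hx0; ring). field. repeat split; try apply pow_nonzero; auto; lra.
Qed.

Lemma psum_int x n : x * (1 - x) <> 0 ->
  is_RInt (fun v => sum_n (fun k => pp x (INR k) * zz x v ^ k) n) 0 1 (sum_n (term1 x) n).
Proof.
  intros Ht. induction n as [|n IH].
  - rewrite sum_O. eapply is_RInt_ext; [|apply term_int; auto]. intros v _. rewrite sum_O. auto.
  - rewrite sum_Sn. eapply is_RInt_ext; [|apply (is_RInt_plus _ _ _ _ _ _ IH (term_int x (S n) Ht))].
    intros v _. rewrite sum_Sn. auto.
Qed.

Lemma tele x z n : (1-z)^3 * sum_n (fun k => pp x (INR k) * z^k) n = MM x 0 z - z^(S n) * MM x (INR (S n)) z.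
Proof.
  induction n as [|n IH].
  - rewrite sum_O. unfold MM, pp. simpl. ring.
  - rewrite sum_Sn. change (plus ?a ?b) with (a+b). rewrite Rmult_plus_distr_l, IH.
    rewrite (S_INR (S n)). set (m := INR (S n)). unfold MM, pp. simpl pow. ring.
Qed.
Lemma series_of_lim (a : nat -> R) (l : R) : is_lim_seq (sum_n a) l -> is_series a l.
Proof. intros H. exact H. Qed.

Lemma geo_lim r : 0 <= r < 1 ->
  is_lim_seq (fun n => INR (S n) * INR (S (S n)) * r^n) 0.
Proof.
  intros Hr.
  set (a := PS_derive (PS_derive (fun _ : nat => 1))).
  assert (Hc : Rbar_lt (Rabs r) (CV_radius a)).
  { unfold a. rewrite !CV_radius_derive. rewrite Rabs_pos_eq by lra.
    destruct (CV_radius_bounded (fun _ : nat => 1)) as [Hub _].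
    assert (HE : Rbar_le ((1 + r)/2) (CV_radius (fun _ : nat => 1))).
    { apply Hub. exists 1. intros n. rewrite Rmult_1_l, <- RPow_abs.
      rewrite Rabs_pos_eq by lra. apply Rle_trans with (1^n); [apply pow_incr; lra | rewrite pow1; lra]. }
    destruct (CV_radius (fun _ : nat => 1)) as [l| |]; simpl in *; lra. }
  pose proof (ex_series_lim_0 _ (ex_series_Rabs _ (CV_disk_inside _ _ Hc))) as H.
  eapply is_lim_seq_ext; [|exact H]. intros n. unfold a, PS_derive. ring.
Qed.

Lemma abs3 a b g z : Rabs z <= 1 -> Rabs (a + b*z + g*z^2) <= Rabs a + Rabs b + Rabs g.
Proof.
  intros Hz.
  eapply Rle_trans; [apply Rabs_triang|].
  eapply Rle_trans; [apply Rplus_le_compat_r, Rabs_triang|].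
  rewrite !Rabs_mult, <- RPow_abs.
  pose proof (Rabs_pos b). pose proof (Rabs_pos g). pose proof (Rabs_pos z).
  assert (Rabs z ^ 2 <= 1) by nra.
  nra.
Qed.

Definition cc x := Rabs (Ac x) + Rabs (Bc x).

Lemma pp_bound x m : 0 <= m -> Rabs (pp x m) <= 4 * cc x * (m+1)^2.
Proof.
  intros Hm. unfold pp, cc. rewrite Rabs_mult.
  pose proof (Rabs_pos (Ac x)); pose proof (Rabs_pos (Bc x)).
  assert (H1: Rabs (Ac x * m - Bc x) <= (Rabs (Ac x) + Rabs (Bc x)) * (m+1)).
  { unfold Rminus. eapply Rle_trans; [apply Rabs_triang|].
    rewrite Rabs_Ropp, Rabs_mult, (Rabs_pos_eq m) by lra. nra. }
  rewrite (Rabs_pos_eq (4*m+1)) by lra. pose proof (Rabs_pos (Ac x * m - Bc x)). nra.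
Qed.

Lemma MM_bound x m z : 0 <= m -> Rabs z <= 1 -> Rabs (MM x m z) <= 128 * cc x * (m+1)^2.
Proof.
  intros Hm Hz. unfold MM. eapply Rle_trans; [apply abs3; auto|].
  pose proof (pp_bound x m Hm) as H0.
  pose proof (pp_bound x (m+1) ltac:(lra)) as H1.
  pose proof (pp_bound x (m+2) ltac:(lra)) as H2.
  set (a0 := pp x m) in *. set (a1 := pp x (m+1)) in *. set (a2 := pp x (m+2)) in *.
  assert (Hb: Rabs (a1 - 3*a0) <= Rabs a1 + 3*Rabs a0).
  { unfold Rminus. eapply Rle_trans; [apply Rabs_triang|]. rewrite Rabs_Ropp, Rabs_mult, (Rabs_pos_eq 3) by lra. lra. }
  assert (Hg: Rabs (a2 - 3*a1 + 3*a0) <= Rabs a2 + 3*Rabs a1 + 3*Rabs a0).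
  { unfold Rminus. eapply Rle_trans; [apply Rabs_triang|]. eapply Rle_trans; [apply Rplus_le_compat_r, Rabs_triang|].
    rewrite Rabs_Ropp, !Rabs_mult, (Rabs_pos_eq 3) by lra. lra. }
  assert (Hc : 0 <= cc x) by (unfold cc; pose proof (Rabs_pos (Ac x)); pose proof (Rabs_pos (Bc x)); lra).
  assert (Hq : 7*(m+1)^2 + 4*(m+1+1)^2 + (m+2+1)^2 <= 32*(m+1)^2) by nra.
  assert (4 * cc x * (7*(m+1)^2 + 4*(m+1+1)^2 + (m+2+1)^2) <= 4 * cc x * (32*(m+1)^2)) by (apply Rmult_le_compat_l; lra).
  lra.
Qed.

Definition En x n v := zz x v ^ (S n) * MM x (INR (S n)) (zz x v) / (1 - zz x v)^3.

Lemma En_bound x n v : 4*(x*(1-x)) < -1 -> 0 <= v <= 1 ->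
  Rabs (En x n v) <= 256 * cc x * (-1/(4*(x*(1-x)))) * (INR (S n) * INR (S (S n)) * (-1/(4*(x*(1-x))))^n).
Proof.
  intros Ht Hv.
  set (T := 4*(x*(1-x))) in *.
  set (rho := -1/T).
  assert (HrT : rho * (-T) = 1) by (unfold rho; field; lra).
  assert (Hrho : 0 < rho < 1) by (split; nra).
  assert (Hw : 0 <= (1-v^2)^2 <= 1).
  { split; [apply pow2_ge_0|]. assert (0 <= 1 - v^2 <= 1) by nra. nra. }
  assert (Hzz : zz x v = - ((1-v^2)^2) * rho) by (unfold zz, rho; fold T; field; lra).
  assert (Hz1 : Rabs (zz x v) <= rho).
  { rewrite Hzz. apply Rabs_le. split; nra. }
  assert (Hz0 : zz x v <= 0) by (rewrite Hzz; nra).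
  unfold En. unfold Rdiv. rewrite !Rabs_mult, Rabs_inv.
  set (a := Rabs (zz x v ^ S n)).
  set (b := Rabs (MM x (INR (S n)) (zz x v))).
  set (d := / Rabs ((1 - zz x v)^3)).
  assert (Ha : 0 <= a <= rho^(S n)).
  { unfold a. split; [apply Rabs_pos|]. rewrite <- RPow_abs. apply pow_incr. split; [apply Rabs_pos|lra]. }
  pose proof (pos_INR n) as Hn.
  assert (Hb : 0 <= b <= 256 * cc x * (INR (S n) * INR (S (S n)))).
  { unfold b. split; [apply Rabs_pos|].
    eapply Rle_trans; [apply MM_bound; [apply pos_INR | lra]|].
    assert (Hc : 0 <= cc x) by (unfold cc; pose proof (Rabs_pos (Ac x)); pose proof (Rabs_pos (Bc x)); lra).
    rewrite !S_INR.
    assert ((INR n + 1 + 1)^2 <= 2 * ((INR n + 1) * (INR n + 1 + 1))) by nra.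
    nra. }
  assert (Hd : 0 <= d <= 1).
  { unfold d. assert (1 <= (1 - zz x v)^3).
    { assert (1 <= 1 - zz x v) by lra. 
      replace 1 with (1^3) at 1 by ring. apply pow_incr. lra. }
    rewrite Rabs_pos_eq by lra. split.
    - left. apply Rinv_0_lt_compat. lra.
    - rewrite <- Rinv_1. apply Rinv_le_contravar; lra. }
  assert (Hab : a * b <= rho^(S n) * (256 * cc x * (INR (S n) * INR (S (S n))))).
  { apply Rmult_le_compat; lra. }
  assert (a * b * d <= a * b) by (assert (0 <= a*b) by nra; nra).
  simpl pow in Hab. 
  eapply Rle_trans; [eassumption|]. eapply Rle_trans; [eassumption|]. right. ring.
Qed.

Lemma part1 x : (1 < x \/ x < 0) -> 4*(x*(1-x)) < -1 ->
  is_series (term1 x) ((1-x)*(3*Rfun x + 4*x*(x-3))).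
Proof.
  intros Hx Ht. set (L := (1-x)*(3*Rfun x + 4*x*(x-3))).
  assert (Ht0 : x*(1-x) <> 0) by (intro H; rewrite H in Ht; lra).
  assert (HE : forall n, is_RInt (En x n) 0 1 (L - sum_n (term1 x) n)).
  { intro n. eapply is_RInt_ext; [|apply (is_RInt_minus _ _ _ _ _ _ (Phi_int x Hx Ht) (psum_int x n Ht0))].
    intros v _. change (minus ?a ?b) with (a - b).
    pose proof (tele x (zz x v) n) as T.
    assert (Hz0 : zz x v <= 0).
    { unfold zz. unfold Rdiv. pose proof (pow2_ge_0 (1 - v^2)).
      assert (/ (4*(x*(1-x))) < 0) by (apply Rinv_lt_0_compat; lra). nra. }
    assert (Hnz : (1 - zz x v)^3 <> 0) by (apply pow_nonzero; lra).
    cbv beta. set (Sm := sum_n (fun k : nat => pp x (INR k) * zz x v ^ k) n) in *.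
    assert (HS : Sm = (MM x 0 (zz x v) - zz x v ^ (S n) * MM x (INR (S n)) (zz x v)) / (1 - zz x v)^3).
    { apply Rmult_eq_reg_l with ((1 - zz x v)^3); auto. rewrite T. assert (1 - zz x v <> 0) by lra. field. auto. }
    rewrite HS. unfold Phi, En. match goal with |- ?a = ?b => change (@eq R a b) end. assert (1 - zz x v <> 0) by lra. field. auto. }
  apply series_of_lim.
  set (rho := -1/(4*(x*(1-x)))).
  assert (HrT : rho * (-(4*(x*(1-x)))) = 1) by (unfold rho; field; lra).
  assert (Hrho : 0 < rho < 1) by (split; nra).
  assert (Hlim : is_lim_seq (fun n => L - sum_n (term1 x) n) 0).
  { apply is_lim_seq_abs_0.
    apply is_lim_seq_le_le with (u := fun _ => 0)
      (w := fun n => 256 * cc x * rho * (INR (S n) * INR (S (S n)) * rho^n)).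
    - intro n. split; [apply Rabs_pos|].
      rewrite <- (is_RInt_unique _ _ _ _ (HE n)).
      eapply Rle_trans.
      + apply abs_RInt_le_const; [lra | exists (L - sum_n (term1 x) n); apply HE |].
        intros v Hv. apply En_bound; auto.
      + right. unfold rho. ring.
    - apply is_lim_seq_const.
    - replace (Finite 0) with (Rbar_mult (256 * cc x * rho) 0) by (simpl; f_equal; ring).
      apply is_lim_seq_scal_l. apply geo_lim. lra. }
  pose proof (is_lim_seq_minus' _ _ _ _ (is_lim_seq_const L) Hlim) as H.
  replace (L - 0) with L in H by ring.
  eapply is_lim_seq_ext; [|exact H]. intros n; simpl; ring.
Qed.

Lemma part2 x : (1 < 1 - x \/ 1 - x < 0) -> 4*((1-x)*(1-(1-x))) < -1 ->
  is_series (fun k : nat =>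
      (2 * (2 * x - 1) ^ 2 * (2 * x + 1) * INR k
         - (4 * x ^ 3 + 4 * x ^ 2 - 13 * x - 1)) * 4 ^ k
      / ((x * (1 - x)) ^ k * binomR (4 * k) (2 * k)))
    (- x * (3 * Rfun (1 - x) + 4 * (x - 1) * (x + 2))).
Proof.
  intros H1 H2.
  pose proof (is_series_opp _ _ (part1 (1-x) H1 H2)) as H.
  change (opp ?a) with (- a) in H.
  replace (- x * (3 * Rfun (1 - x) + 4 * (x - 1) * (x + 2)))
    with (- ((1 - (1 - x)) * (3 * Rfun (1 - x) + 4 * (1 - x) * (1 - x - 3)))) by ring.
  eapply is_series_ext; [|exact H]. intros k. cbv beta. change (opp ?a) with (- a).
  unfold term1. replace ((1 - x) * (1 - (1 - x))) with (x * (1 - x)) by ring.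
  unfold Rdiv. match goal with |- ?a = ?b => change (@eq R a b) end. ring.
Qed.

Theorem theorem1p3 (x : R)
  (hx : x > (1 + sqrt 2) / 2 \/ x < (1 - sqrt 2) / 2) :
  is_series (fun k : nat =>
      (2 * (2 * x - 1) ^ 2 * (2 * x - 3) * INR k
         - (4 * x ^ 3 - 16 * x ^ 2 + 7 * x + 6)) * 4 ^ k
      / ((x * (1 - x)) ^ k * binomR (4 * k) (2 * k)))
    ((1 - x) * (3 * Rfun x + 4 * x * (x - 3)))
  /\
  is_series (fun k : nat =>
      (2 * (2 * x - 1) ^ 2 * (2 * x + 1) * INR k
         - (4 * x ^ 3 + 4 * x ^ 2 - 13 * x - 1)) * 4 ^ k
      / ((x * (1 - x)) ^ k * binomR (4 * k) (2 * k)))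
    (- x * (3 * Rfun (1 - x) + 4 * (x - 1) * (x + 2))).
Proof.
  assert (Hs2 : sqrt 2 * sqrt 2 = 2) by (apply sqrt_sqrt; lra).
  assert (Hs1 : 1 < sqrt 2).
  { rewrite <- sqrt_1. apply sqrt_lt_1; lra. }
  assert (Ht : 4*(x*(1-x)) < -1) by (destruct hx; nra).
  assert (Ht' : 4*((1-x)*(1-(1-x))) < -1) by (replace ((1-x)*(1-(1-x))) with (x*(1-x)) by ring; exact Ht).
  split.
  - apply (part1 x); [destruct hx; [left|right]; lra | exact Ht].
  - apply part2; [destruct hx; [right|left]; lra | exact Ht'].
Qed.
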